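(* For $k=1,2$ let $p_k,q_k\ge0$ be integers, $l_k=p_k+q_k$, $f_k\in\mathfrak H^{\odot p_k}\otimes\mathfrak H^{\odot q_k}$, and let $h_k$ be the reverse complex conjugate of $f_k$. Then for $0\le i\le p_1\wedge q_2$ and $0\le j\le q_1\wedge p_2$, $$\|f_1\tilde\otimes_{i,j}f_2\|_{\mathfrak H^{\otimes(l_1+l_2-2(i+j))}}\le\|f_1\otimes_{i,j}f_2\|_{\mathfrak H^{\otimes(l_1+l_2-2(i+j))}}\le\|f_1\|_{\mathfrak H^{\otimes l_1}}\|f_2\|_{\mathfrak H^{\otimes l_2}},$$ and $$\|f_1\otimes_{i,j}f_2\|^2_{\mathfrak H^{\otimes(l_1+l_2-2(i+j))}}\le\frac12\|f_1\otimes_{p_1-i,q_1-j}h_1\|^2_{\mathfrak H^{\otimes 2(i+j)}}+\frac12\|f_2\otimes_{p_2-j,q_2-i}h_2\|^2_{\mathfrak H^{\otimes 2(i+j)}}.$$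
   Context: Let $\mathfrak H$ be a complex separable Hilbert space with orthonormal basis $\{e_k\}_{k\ge1}$, and let $Z=\{Z(h):h\in\mathfrak H\}$ be a complex isonormal Gaussian process: a centered symmetric complex Gaussian family with $\mathbb E[Z(h)^2]=0$ and $\mathbb E[Z(g)\overline{Z(h)}]=\langle g,h\rangle_{\mathfrak H}$. The complex Hermite polynomials $H_{p,q}$ are defined by $\exp\{\lambda\bar z+\bar\lambda z-2|\lambda|^2\}=\sum_{p,q\ge0}\frac{\bar\lambda^p\lambda^q}{p!q!}H_{p,q}(z)$. The complex multiple Wiener–Itô integral $I_{p,q}$ on $\mathfrak H^{\odot p}\otimes\mathfrak H^{\odot q}$ is determined by $I_{p,q}\big((\tilde\otimes_k e_k^{\otimes p_k})\otimes(\tilde\otimes_k\overline{e_k}^{\otimes q_k})\big)=\prod_k 2^{-(p_k+q_k)/2}H_{p_k,q_k}(\sqrt2 Z(e_k))$ ($\sum p_k=p,\sum q_k=q$), extended linearly and continuously. The reverse complex conjugate of $f\in\mathfrak H^{\odot p}\otimes\mathfrak H^{\odot q}$ is the $h\in\mathfrak H^{\odot q}\otimes\mathfrak H^{\odot p}$ with $\overline{I_{p,q}(f)}=I_{q,p}(h)$ (for $\mathfrak H=L^2_{\mathbb C}(T,\mu)$: $h(t_1..t_q;s_1..s_p)=\overline{f(s_1..s_p;t_1..t_q)}$). For $f\in\mathfrak H^{\odot a}\otimes\mathfrak H^{\odot b}$, $g\in\mathfrak H^{\odot c}\otimes\mathfrak H^{\odot d}$, $0\le i\le a\wedge d$, $0\le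 j\le b\wedge c$, the contraction is $f\otimes_{i,j}g=\sum_{l_1,\dots,l_{i+j}}\langle f,e_{l_1}\otimes\cdots\otimes e_{l_i}\otimes\overline{e_{l_{i+1}}}\otimes\cdots\otimes\overline{e_{l_{i+j}}}\rangle\otimes\langle g,e_{l_{i+1}}\otimes\cdots\otimes e_{l_{i+j}}\otimes\overline{e_{l_1}}\otimes\cdots\otimes\overline{e_{l_i}}\rangle\in\mathfrak H^{\otimes(a+c-i-j)}\otimes\mathfrak H^{\otimes(b+d-i-j)}$; for $\mathfrak H=L^2_{\mathbb C}$, $f\otimes_{i,j}g(t_1..t_{a+c-i-j};s_1..s_{b+d-i-j})=\int f(t_1..t_{a-i},u_1..u_i;s_1..s_{b-j},v_1..v_j)\,g(t_{a-i+1}..t_{a+c-i-j},v_1..v_j;s_{b-j+1}..s_{b+d-i-j},u_1..u_i)\,d\vec u\,d\vec v$. $f\otimes_{0,0}g=f\otimes g$. $f\tilde\otimes_{i,j}g$ denotes the symmetrization of $f\otimes_{i,j}g$ (separately in its first $a+c-i-j$ and last $b+d-i-j$ arguments). *)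

(* Defs.v *)
From HB Require Import structures.
From mathcomp Require Import all_boot all_order all_algebra all_fingroup.
From mathcomp Require Import all_classical all_reals all_analysis.
From mathcomp Require Import complex.
Set Implicit Arguments. Unset Strict Implicit. Unset Printing Implicit Defensive.
Import Order.TTheory GRing.Theory Num.Theory.
Local Open Scope classical_set_scope.
Local Open Scope ring_scope.

(* Model: H = L^2_C(I, counting measure) = l^2(I) for a countable index set I
   (any complex separable Hilbert space is of this form, {e_k} = indicators).
   An element of H^{(x)p} (x) H^{(x)q} is represented by its kernel
   f(t_1..t_p ; s_1..s_q), encoded as a function seq I -> seq I -> R[i]
   whose values are only relevant on lists of sizes p and q. *)

Section Tensors.
Variables (R : realType) (I : countType).

Definition tensor := seq I -> seq I -> R[i].

Definition sqmod (z : R[i]) : R := complex.Re z ^+ 2 + complex.Im z ^+ 2.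

Definition cconj (z : R[i]) : R[i] := (complex.Re z -i* complex.Im z)%C.

Definition arity (p q : nat) : set (seq I * seq I) :=
  [set x | size x.1 = p /\ size x.2 = q].

Definition hnorm2 (p q : nat) (f : tensor) : \bar R :=
  \esum_(x in arity p q) (sqmod (f x.1 x.2))%:E.

Definition hnorm (p q : nat) (f : tensor) : R := Num.sqrt (fine (hnorm2 p q f)).

Definition in_sym_space (p q : nat) (f : tensor) : Prop :=
  (hnorm2 p q f < +oo)%E /\
  (forall t t' s s', size t = p -> size s = q ->
     perm_eq t t' -> perm_eq s s' -> f t s = f t' s').

Definition rconj (f : tensor) : tensor := fun t s => cconj (f s t).

Definition rsum (T : choiceType) (D : set T) (g : T -> R) : R :=
  fine (\esum_(x in D) (Num.max (g x) 0)%:E)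
  - fine (\esum_(x in D) (Num.max (- g x) 0)%:E).

Definition csum (T : choiceType) (D : set T) (F : T -> R[i]) : R[i] :=
  (rsum D (fun x => complex.Re (F x)) +i* rsum D (fun x => complex.Im (F x)))%C.

(* contr f (x)_{i,j} g for f with arity (a,b):
   (f (x)_{i,j} g)(t ; s) = sum_{u in I^i, v in I^j}
      f(t_1..t_{a-i}, u ; s_1..s_{b-j}, v) g(t_{a-i+1}.., v ; s_{b-j+1}.., u) *)
Definition contr (a b i j : nat) (f g : tensor) : tensor :=
  fun t s => csum (arity i j) (fun uv =>
    f (take (a - i) t ++ uv.1) (take (b - j) s ++ uv.2) *
    g (drop (a - i) t ++ uv.2) (drop (b - j) s ++ uv.1)).

Definition pseq (n : nat) (sigma : 'S_n) (t : seq I) : seq I :=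
  match t with
  | [::] => [::]
  | x :: _ => [seq nth x t (sigma k) | k <- enum 'I_n]
  end.

Definition symz (n m : nat) (F : tensor) : tensor :=
  fun t s => ((n`!)%:R * (m`!)%:R)^-1 *
    \sum_(sigma : 'S_n) \sum_(tau : 'S_m) F (pseq sigma t) (pseq tau s).

End Tensors.

(* Main.v *)
Require Import Defs.
From HB Require Import structures.
From mathcomp Require Import all_boot all_order all_algebra all_fingroup.
From mathcomp Require Import all_classical all_reals all_analysis.
From mathcomp Require Import complex.
From mathcomp Require Import ring lra zify.
From Stdlib Require Import Lia.
Import Order.TTheory GRing.Theory Num.Theory numFieldNormedType.Exports.
Local Open Scope classical_set_scope.
Local Open Scope ring_scope.



Section Cx.
Context {R : realType}.
Implicit Types x y z : R[i].

Lemma cReD x y : complex.Re (x + y) = complex.Re x + complex.Re y.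
Proof. by case: x; case: y. Qed.
Lemma cImD x y : complex.Im (x + y) = complex.Im x + complex.Im y.
Proof. by case: x; case: y. Qed.
Lemma cReM x y : complex.Re (x * y) = complex.Re x * complex.Re y - complex.Im x * complex.Im y.
Proof. by case: x => a b; case: y => c d. Qed.
Lemma cImM x y : complex.Im (x * y) = complex.Re x * complex.Im y + complex.Im x * complex.Re y.
Proof. by case: x => a b; case: y => c d. Qed.
Lemma sqmodM x y : sqmod (x * y) = sqmod x * sqmod y.
Proof. rewrite /sqmod cReM cImM; ring. Qed.
Lemma sqmod_ge0 z : 0 <= sqmod z.
Proof. by rewrite /sqmod addr_ge0 ?sqr_ge0. Qed.
Lemma sqmod_cconj z : sqmod (cconj z) = sqmod z.
Proof. by case: z => a b; rewrite /sqmod /cconj /= sqrrN. Qed.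
Lemma cconjE z : cconj z = (z^*)%C.
Proof. by case: z. Qed.

Lemma Re_sum (T : Type) (r : seq T) (F : T -> R[i]) :
  complex.Re (\sum_(k <- r) F k) = \sum_(k <- r) complex.Re (F k).
Proof. elim: r => [|a r IH]; first by rewrite !big_nil. by rewrite !big_cons cReD IH. Qed.
Lemma Im_sum (T : Type) (r : seq T) (F : T -> R[i]) :
  complex.Im (\sum_(k <- r) F k) = \sum_(k <- r) complex.Im (F k).
Proof. elim: r => [|a r IH]; first by rewrite !big_nil. by rewrite !big_cons cImD IH. Qed.

Definition nc z : R := Num.sqrt (sqmod z).
Lemma nc_ge0 z : 0 <= nc z. Proof. exact: sqrtr_ge0. Qed.
Lemma nc_sq z : nc z ^+ 2 = sqmod z.
Proof. by rewrite /nc sqr_sqrtr // sqmod_ge0. Qed.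
Lemma ncE z : nc z = Normc.normc z.
Proof. by case: z. Qed.
Lemma ncD x y : nc (x + y) <= nc x + nc y.
Proof. rewrite !ncE; exact: le_normcD. Qed.
Lemma ncM x y : nc (x * y) = nc x * nc y.
Proof. by rewrite !ncE Normc.normcM. Qed.
Lemma nc_sum (T : Type) (r : seq T) (F : T -> R[i]) :
  nc (\sum_(k <- r) F k) <= \sum_(k <- r) nc (F k).
Proof.
elim: r => [|a r IH]; first by rewrite !big_nil /nc /sqmod /= expr0n /= addr0 sqrtr0.
rewrite !big_cons; apply: le_trans (ncD _ _) _; exact: lerD.
Qed.

Lemma absReM x y : `|complex.Re (x * y)| <= sqmod x + sqmod y.
Proof.
rewrite cReM /sqmod; case: x => a b; case: y => c d /=.
rewrite ler_norml; apply/andP; split.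
  have := sqr_ge0 (a + c); have := sqr_ge0 (b - d); nra.
have := sqr_ge0 (a - c); have := sqr_ge0 (b + d); nra.
Qed.
Lemma absImM x y : `|complex.Im (x * y)| <= sqmod x + sqmod y.
Proof.
rewrite cImM /sqmod; case: x => a b; case: y => c d /=.
rewrite ler_norml; apply/andP; split.
  have := sqr_ge0 (a + d); have := sqr_ge0 (b + c); nra.
have := sqr_ge0 (a - d); have := sqr_ge0 (b - c); nra.
Qed.
Lemma ReM_le x y : complex.Re (x * y) <= 2^-1 * sqmod x + 2^-1 * sqmod y.
Proof. rewrite cReM /sqmod; case: x => a b; case: y => c d /=.
have := sqr_ge0 (a - c); have := sqr_ge0 (b + d); nra. Qed.

Lemma sqmod_Re z : sqmod z = complex.Re (z * cconj z).
Proof. rewrite /sqmod; case: z => a b /=; ring. Qed.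

Lemma CSr (T : Type) (r : seq T) (a b : T -> R) :
  (\sum_(k <- r) a k * b k) ^+ 2 <=
  (\sum_(k <- r) a k ^+ 2) * (\sum_(k <- r) b k ^+ 2).
Proof.
have H : 0 <= \sum_(k <- r) \sum_(l <- r) (a k * b l - a l * b k) ^+ 2.
  by apply: sumr_ge0 => k _; apply: sumr_ge0 => l _; apply: sqr_ge0.
have E : \sum_(k <- r) \sum_(l <- r) (a k * b l - a l * b k) ^+ 2 =
  2 * ((\sum_(k <- r) a k ^+ 2) * (\sum_(k <- r) b k ^+ 2)) -
  2 * (\sum_(k <- r) a k * b k) ^+ 2.
  have -> : \sum_(k <- r) \sum_(l <- r) (a k * b l - a l * b k) ^+ 2 =
    \sum_(k <- r) \sum_(l <- r) (a k ^+ 2 * b l ^+ 2) +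
    \sum_(k <- r) \sum_(l <- r) (a l ^+ 2 * b k ^+ 2) -
    2 * \sum_(k <- r) \sum_(l <- r) (a k * b k) * (a l * b l).
    rewrite -big_split /= mulr_sumr -sumrB; apply: eq_bigr => k _.
    rewrite -big_split /= mulr_sumr -sumrB; apply: eq_bigr => l _; ring.
  rewrite [\sum_(k <- r) \sum_(l <- r) (a l ^+ 2 * b k ^+ 2)]exchange_big /=.
  rewrite expr2 !mulr_suml; congr (_ - _).
    rewrite -mulr2n mulr_natl; congr (_ *+ 2).
    by apply: eq_bigr => k _; rewrite mulr_sumr.
  by congr (2 * _); apply: eq_bigr => k _; rewrite mulr_sumr.
move: H; rewrite E subr_ge0 => H.
by rewrite -(@ler_pM2l _ 2) //.
Qed.

Lemma CSc (T : Type) (r : seq T) (a b : T -> R[i]) :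
  sqmod (\sum_(k <- r) a k * b k) <=
  (\sum_(k <- r) sqmod (a k)) * (\sum_(k <- r) sqmod (b k)).
Proof.
rewrite -nc_sq.
have h1 : nc (\sum_(k <- r) a k * b k) <= \sum_(k <- r) nc (a k) * nc (b k).
  apply: le_trans (nc_sum _ r (fun k => a k * b k)) _.
  by apply: ler_sum => k _; rewrite ncM.
apply: (@le_trans _ _ ((\sum_(k <- r) nc (a k) * nc (b k)) ^+ 2)).
  by rewrite ler_sqr ?nnegrE ?nc_ge0 // sumr_ge0 // => k _; rewrite mulr_ge0 ?nc_ge0.
apply: le_trans (CSr _ r _ _) _.
by rewrite le_eqVlt; apply/orP; left; apply/eqP; congr (_ * _); apply: eq_bigr => k _; rewrite nc_sq.
Qed.

Lemma fin3 (X W Y : Type) (xs : seq X) (ws : seq W) (ys : seq Y)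
  (F : X -> W -> R[i]) (G : W -> Y -> R[i]) :
  \sum_(x <- xs) \sum_(y <- ys) sqmod (\sum_(w <- ws) F x w * G w y) <=
  2^-1 * \sum_(w <- ws) \sum_(w' <- ws) sqmod (\sum_(x <- xs) F x w * cconj (F x w'))
  + 2^-1 * \sum_(w <- ws) \sum_(w' <- ws) sqmod (\sum_(y <- ys) G w y * cconj (G w' y)).
Proof.
set A := fun w w' => \sum_(x <- xs) F x w * cconj (F x w').
set B := fun w w' => \sum_(y <- ys) G w y * cconj (G w' y).
have E : \sum_(x <- xs) \sum_(y <- ys) sqmod (\sum_(w <- ws) F x w * G w y) =
  complex.Re (\sum_(w <- ws) \sum_(w' <- ws) (A w w' * B w w')).
  transitivity (complex.Re (\sum_(x <- xs) \sum_(y <- ys) \sum_(w <- ws) \sum_(w' <- ws)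
       (F x w * G w y) * cconj (F x w' * G w' y))).
    rewrite Re_sum; apply: eq_bigr => x _; rewrite Re_sum; apply: eq_bigr => y _.
    rewrite sqmod_Re cconjE rmorph_sum mulr_suml; congr complex.Re.
    by apply: eq_bigr => w _; rewrite mulr_sumr; apply: eq_bigr => w' _; rewrite cconjE.
  congr complex.Re.
  have step1 : forall x : X, \sum_(y <- ys) \sum_(w <- ws) \sum_(w' <- ws)
       (F x w * G w y) * cconj (F x w' * G w' y) =
     \sum_(w <- ws) \sum_(w' <- ws) \sum_(y <- ys)
       (F x w * G w y) * cconj (F x w' * G w' y).
    by move=> x; rewrite exchange_big; apply: eq_bigr => w _; rewrite exchange_big.
  under eq_bigr do rewrite step1.
  rewrite exchange_big; apply: eq_bigr => w _.
  rewrite exchange_big; apply: eq_bigr => w' _.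
  rewrite /A /B mulr_suml; apply: eq_bigr => x _; rewrite mulr_sumr; apply: eq_bigr => y _.
  rewrite !cconjE rmorphM; ring.
rewrite E Re_sum.
apply: le_trans (_ : \sum_(w <- ws) \sum_(w' <- ws)
   (2^-1 * sqmod (A w w') + 2^-1 * sqmod (B w w')) <= _).
  apply: ler_sum => w _; rewrite Re_sum; apply: ler_sum => w' _; exact: ReM_le.
rewrite !mulr_sumr -big_split /=; apply: ler_sum => w _.
by rewrite !mulr_sumr -big_split /=.
Qed.
End Cx.



Section Exh.
Context {R : realType}.

Definition exh {T : choiceType} (D : set T) (e : nat -> seq T) : Prop :=
  [/\ forall N, uniq (e N), forall N x, x \in e N -> D x,
      forall N M, (N <= M)%N -> {subset e N <= e M} &
      forall x, D x -> exists N, x \in e N].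

Lemma exh_uniq {T : choiceType} {D : set T} {e} : exh D e -> forall N, uniq (e N).
Proof. by case. Qed.
Lemma exh_sub {T : choiceType} {D : set T} {e} : exh D e -> forall N x, x \in e N -> D x.
Proof. by case. Qed.
Lemma exh_mono {T : choiceType} {D : set T} {e} : exh D e ->
  forall N M, (N <= M)%N -> {subset e N <= e M}.
Proof. by case. Qed.

Lemma exh_seq (T : choiceType) (D : set T) e : exh D e ->
  forall s : seq T, (forall x, x \in s -> D x) -> exists N, {subset s <= e N}.
Proof.
case=> _ _ mono cov; elim=> [|a s IH] Hs; first by exists 0%N.
have [N1 H1] := cov a (Hs a (mem_head _ _)).
have [N2 H2] : exists N, {subset s <= e N}.
  by apply: IH => x xs; apply: Hs; rewrite inE xs orbT.
exists (maxn N1 N2) => x; rewrite inE => /orP[/eqP ->|xs].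
  by apply: mono H1; rewrite leq_maxl.
by apply: mono (H2 _ xs); rewrite leq_maxr.
Qed.

Lemma sum_sub_le (T : eqType) (s1 s2 : seq T) (r : T -> R) :
  uniq s1 -> uniq s2 -> {subset s1 <= s2} -> (forall x, x \in s2 -> 0 <= r x) ->
  \sum_(x <- s1) r x <= \sum_(x <- s2) r x.
Proof.
move=> u1 u2 sub r0.
rewrite [leRHS](bigID (mem s1)) /=.
have -> : \sum_(i <- s2 | i \in s1) r i = \sum_(x <- s1) r x.
  rewrite -big_filter; apply: perm_big; apply: uniq_perm => //.
    exact: filter_uniq.
  by move=> x; rewrite mem_filter; case xs1: (x \in s1) => //=; rewrite sub.
rewrite lerDl; rewrite big_seq_cond; apply: sumr_ge0 => x /andP[xs _]; exact: r0.
Qed.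

Lemma esum_ge_seq (T : choiceType) (D : set T) (s : seq T) (r : T -> R) :
  uniq s -> (forall x, x \in s -> D x) ->
  ((\sum_(x <- s) r x)%:E <= \esum_(x in D) (r x)%:E)%E.
Proof.
move=> us sD; rewrite -sumEFin fsbig_seq //; apply: esum_ge.
exists [set` s]; last by [].
by split; [exact: finite_seq | move=> x /= xs; apply: sD].
Qed.

Lemma esum_le_exh {T : choiceType} {D : set T} {e} {r : T -> R} {M : R} :
  exh D e -> (forall x, D x -> 0 <= r x) ->
  (forall N, \sum_(x <- e N) r x <= M) -> (\esum_(x in D) (r x)%:E <= M%:E)%E.
Proof.
move=> he r0 HM; apply: ge_ereal_sup => _ [X [finX XD] <-].
rewrite fsbig_finite //= sumEFin lee_fin.
have [N HN] : exists N, {subset (finmap.enum_fset (fset_set X)) <= e N}.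
  apply: (@exh_seq _ _ _ he) => x; rewrite in_fset_set // inE; exact: XD.
apply: le_trans (HM N); apply: sum_sub_le => //.
  by case: he.
by move=> x /(exh_sub he N) /r0.
Qed.

Lemma esum_fin {T : choiceType} {D : set T} {r : T -> R} :
  (forall x, D x -> 0 <= r x) -> (\esum_(x in D) (r x)%:E < +oo)%E ->
  \esum_(x in D) (r x)%:E \is a fin_num.
Proof.
move=> r0 lt; rewrite ge0_fin_numE //; apply: esum_ge0 => x Dx; rewrite lee_fin; exact: r0.
Qed.

Lemma esum_cvg {T : choiceType} {D : set T} {e} {r : T -> R} :
  exh D e -> (forall x, D x -> 0 <= r x) -> (\esum_(x in D) (r x)%:E < +oo)%E ->
  (fun N => \sum_(x <- e N) r x) @ \oo --> fine (\esum_(x in D) (r x)%:E).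
Proof.
move=> he r0 lt; have fin := esum_fin r0 lt.
set u := fun N => \sum_(x <- e N) r x.
have ub : forall N, u N <= fine (\esum_(x in D) (r x)%:E).
  move=> N; rewrite -lee_fin fineK //; apply: esum_ge_seq; first by case: he.
  exact: (exh_sub he N).
have nd : {homo u : n m / (n <= m)%N >-> n <= m}.
  move=> n m nm; apply: sum_sub_le; try by case: he.
    exact: (exh_mono he).
  by move=> x /(exh_sub he m) /r0.
have hub : has_ubound (range u) by exists (fine (\esum_(x in D) (r x)%:E)) => _ [N _ <-].
have cv := nondecreasing_cvgn nd hub.
suff -> : fine (\esum_(x in D) (r x)%:E) = sup (range u) by [].
have hs : has_sup (range u) by split => //; exists (u 0%N), 0%N.
apply/eqP; rewrite eq_le; apply/andP; split.
  rewrite -lee_fin fineK //; apply: (esum_le_exh he) => // N.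
  by apply: sup_upper_bound => //; exists N.
by apply: ge_sup; [exists (u 0%N), 0%N | move=> _ [N _ <-]].
Qed.


Lemma max0_ge0 (x : R) : 0 <= Num.max x 0.
Proof. by rewrite le_max lexx orbT. Qed.
Lemma max0_le_abs (x : R) : Num.max x 0 <= `|x|.
Proof. by rewrite ge_max normr_ge0 ler_norm. Qed.
Lemma max0E (x : R) : x = Num.max x 0 - Num.max (- x) 0.
Proof.
have [h|h] := lerP 0 x.
  by rewrite max_r ?subr0 // oppr_le0.
by rewrite max_l ?sub0r ?opprK // oppr_ge0 ltW.
Qed.

Lemma rsum_cvg {T : choiceType} {D : set T} {e} {g : T -> R} :
  exh D e -> (\esum_(x in D) (`|g x|)%:E < +oo)%E ->
  (fun N => \sum_(x <- e N) g x) @ \oo --> rsum D g.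
Proof.
move=> he lt.
have lt1 : (\esum_(x in D) (Num.max (g x) 0)%:E < +oo)%E.
  apply: le_lt_trans lt; apply: le_esum => x _; rewrite lee_fin; exact: max0_le_abs.
have lt2 : (\esum_(x in D) (Num.max (- g x) 0)%:E < +oo)%E.
  apply: le_lt_trans lt; apply: le_esum => x _; rewrite lee_fin -normrN; exact: max0_le_abs.
have -> : (fun N => \sum_(x <- e N) g x) = (fun N => \sum_(x <- e N) Num.max (g x) 0 - \sum_(x <- e N) Num.max (- g x) 0).
  apply: funext => N; rewrite -sumrB; apply: eq_bigr => x _; exact: max0E.
apply: (cvgB (esum_cvg he _ lt1) (esum_cvg he _ lt2)) => x _; exact: max0_ge0.
Qed.

Lemma csum_cvg_Re {T : choiceType} {D : set T} {e} {h : T -> R[i]} :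
  exh D e -> (\esum_(x in D) (`|complex.Re (h x)|)%:E < +oo)%E ->
  (fun N => complex.Re (\sum_(x <- e N) h x)) @ \oo --> complex.Re (csum D h).
Proof.
move=> he lt; have -> : (fun N => complex.Re (\sum_(x <- e N) h x)) = (fun N => \sum_(x <- e N) complex.Re (h x)).
  by apply: funext => N; rewrite Re_sum.
exact: rsum_cvg.
Qed.

Lemma csum_cvg_Im {T : choiceType} {D : set T} {e} {h : T -> R[i]} :
  exh D e -> (\esum_(x in D) (`|complex.Im (h x)|)%:E < +oo)%E ->
  (fun N => complex.Im (\sum_(x <- e N) h x)) @ \oo --> complex.Im (csum D h).
Proof.
move=> he lt; have -> : (fun N => complex.Im (\sum_(x <- e N) h x)) = (fun N => \sum_(x <- e N) complex.Im (h x)).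
  by apply: funext => N; rewrite Im_sum.
exact: rsum_cvg.
Qed.

Lemma sqmod_cvg {T : choiceType} {D : set T} {e} {h : T -> R[i]} :
  exh D e -> (\esum_(x in D) (`|complex.Re (h x)|)%:E < +oo)%E ->
  (\esum_(x in D) (`|complex.Im (h x)|)%:E < +oo)%E ->
  (fun N => sqmod (\sum_(x <- e N) h x)) @ \oo --> sqmod (csum D h).
Proof.
move=> he l1 l2; rewrite /sqmod.
have c1 := csum_cvg_Re he l1; have c2 := csum_cvg_Im he l2.
apply: cvgD; rewrite expr2; apply: cvgM => //.
Qed.

Lemma cvg_bigsum (T : eqType) (r : seq T) (u : T -> nat -> R) (l : T -> R) :
  (forall i, i \in r -> u i @ \oo --> l i) ->
  (fun n => \sum_(i <- r) u i n) @ \oo --> \sum_(i <- r) l i.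
Proof.
elim: r => [|a r IH] H.
  have -> : (fun n => \sum_(i <- [::]) u i n) = (fun=> 0) by apply: funext => n; rewrite big_nil.
  rewrite big_nil; exact: cvg_cst.
have -> : (fun n => \sum_(i <- a :: r) u i n) = (fun n => u a n + \sum_(i <- r) u i n).
  by apply: funext => n; rewrite big_cons.
rewrite big_cons; apply: cvgD; first by apply: H; rewrite mem_head.
by apply: IH => i ir; apply: H; rewrite inE ir orbT.
Qed.

Lemma lim_le (u v : nat -> R) (a b : R) (N : nat) :
  u @ \oo --> a -> v @ \oo --> b -> (forall n, (N <= n)%N -> u n <= v n) -> a <= b.
Proof.
move=> hu hv H.
have L : lim (u @ \oo) <= lim (v @ \oo).
  apply: ler_lim.
  - by apply/cvg_ex; exists a.
  - by apply/cvg_ex; exists b.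
  - by exists N => // n /= Nn; apply: H.
have La : lim (u @ \oo) = a by apply: cvg_lim.
have Lb : lim (v @ \oo) = b by apply: cvg_lim.
by rewrite La Lb in L.
Qed.

End Exh.



Section Prod.
Context {R : realType}.

Lemma exhX {X Y : choiceType} {DX : set X} {DY : set Y} {eX eY} :
  exh DX eX -> exh DY eY ->
  exh (DX `*` DY) (fun N => [seq (x, y) | x <- eX N, y <- eY N]).
Proof.
move=> hX hY; split.
- move=> N; apply: allpairs_uniq; [exact: (exh_uniq hX) | exact: (exh_uniq hY) |].
  by move=> [? ?] [? ?] _ _ [-> ->].
- move=> N z /allpairsP [[x y] [/= xi yi ->]]; split; [exact: (exh_sub hX N)|exact: (exh_sub hY N)].
- move=> N M NM z /allpairsP [[x y] [/= xi yi ->]]; apply: allpairs_f.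
    exact: (exh_mono hX N M NM).
  exact: (exh_mono hY N M NM).
- move=> [x y] [/= Dx Dy].
  have [N1 H1] := (let: And4 _ _ _ c := hX in c) x Dx.
  have [N2 H2] := (let: And4 _ _ _ c := hY in c) y Dy.
  exists (maxn N1 N2); apply: allpairs_f.
    by apply: (exh_mono hX N1); rewrite ?leq_maxl.
  by apply: (exh_mono hY N2); rewrite ?leq_maxr.
Qed.

Lemma esum_sub {T : choiceType} (A B : set T) (a : T -> \bar R) :
  A `<=` B -> (forall x, B x -> (0 <= a x)%E) ->
  (\esum_(x in A) a x <= \esum_(x in B) a x)%E.
Proof.
move=> AB a0; rewrite (esum_mkcond A) (esum_mkcond B); apply: le_esum => x _.
case: ifPn => xA; first by rewrite ifT // inE; apply: AB; rewrite inE in xA.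
by case: ifPn => // xB; apply: a0; rewrite inE in xB.
Qed.

Lemma slice1 {X Y : choiceType} (DX : set X) (DY : set Y) (r : X * Y -> R) y :
  DY y -> (forall z, (DX `*` DY) z -> 0 <= r z) ->
  (\esum_(x in DX) (r (x, y))%:E <= \esum_(z in DX `*` DY) (r z)%:E)%E.
Proof.
move=> Dy r0.
have := esum_image DX (fun x => (x, y)) (fun z => (r z)%:E).
move=> /= <-; last by move=> a b _ _ [].
apply: esum_sub; first by move=> _ [x Dx <-].
by move=> z /r0; rewrite lee_fin.
Qed.

Lemma slice2 {X Y : choiceType} (DX : set X) (DY : set Y) (r : X * Y -> R) x :
  DX x -> (forall z, (DX `*` DY) z -> 0 <= r z) ->
  (\esum_(y in DY) (r (x, y))%:E <= \esum_(z in DX `*` DY) (r z)%:E)%E.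
Proof.
move=> Dx r0.
have := esum_image DY (fun y => (x, y)) (fun z => (r z)%:E).
move=> /= <-; last by move=> a b _ _ [].
apply: esum_sub; first by move=> _ [y Dy <-].
by move=> z /r0; rewrite lee_fin.
Qed.

Lemma le_fine (s : R) (E : \bar R) : (s%:E <= E)%E -> (E < +oo)%E -> s <= fine E.
Proof. by case: E => [r||] //=; rewrite lee_fin. Qed.

Lemma summ_prod {T : choiceType} {D : set T} {a b : T -> R[i]} :
  (\esum_(w in D) (sqmod (a w))%:E < +oo)%E ->
  (\esum_(w in D) (sqmod (b w))%:E < +oo)%E ->
  (\esum_(w in D) (`|complex.Re (a w * b w)|)%:E < +oo)%E /\
  (\esum_(w in D) (`|complex.Im (a w * b w)|)%:E < +oo)%E.
Proof.
move=> ha hb.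
have H : (\esum_(w in D) (sqmod (a w) + sqmod (b w))%:E < +oo)%E.
  under eq_esum do rewrite EFinD.
  rewrite esumD; first exact: lte_add_pinfty.
  - by move=> w _; rewrite lee_fin sqmod_ge0.
  - by move=> w _; rewrite lee_fin sqmod_ge0.
split; apply: le_lt_trans H; apply: le_esum => w _; rewrite lee_fin.
  exact: absReM.
exact: absImM.
Qed.

End Prod.

Section Abstract.
Context {R : realType}.
Variables (X W Y : choiceType) (DX : set X) (DW : set W) (DY : set Y).
Variables (eX : nat -> seq X) (eW : nat -> seq W) (eY : nat -> seq Y).
Hypotheses (hX : exh DX eX) (hW : exh DW eW) (hY : exh DY eY).
Variables (F : X -> W -> R[i]) (G : W -> Y -> R[i]).
Let EF := \esum_(z in DX `*` DW) (sqmod (F z.1 z.2))%:E.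
Let EG := \esum_(z in DW `*` DY) (sqmod (G z.1 z.2))%:E.
Hypotheses (hF : (EF < +oo)%E) (hG : (EG < +oo)%E).

Definition Cm x y := csum DW (fun w => F x w * G w y).

Lemma sliceF x : DX x -> (\esum_(w in DW) (sqmod (F x w))%:E < +oo)%E.
Proof.
move=> Dx; apply: le_lt_trans hF.
exact: (@slice2 _ _ _ DX DW (fun z => sqmod (F z.1 z.2)) x Dx (fun z _ => sqmod_ge0 _)).
Qed.

Lemma sliceG y : DY y -> (\esum_(w in DW) (sqmod (G w y))%:E < +oo)%E.
Proof.
move=> Dy; apply: le_lt_trans hG.
exact: (@slice1 _ _ _ DW DY (fun z => sqmod (G z.1 z.2)) y Dy (fun z _ => sqmod_ge0 _)).
Qed.

Lemma sliceF1 w : DW w -> (\esum_(x in DX) (sqmod (F x w))%:E < +oo)%E.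
Proof.
move=> Dw; apply: le_lt_trans hF.
exact: (@slice1 _ _ _ DX DW (fun z => sqmod (F z.1 z.2)) w Dw (fun z _ => sqmod_ge0 _)).
Qed.

Lemma sliceG1 w : DW w -> (\esum_(y in DY) (sqmod (G w y))%:E < +oo)%E.
Proof.
move=> Dw; apply: le_lt_trans hG.
exact: (@slice2 _ _ _ DW DY (fun z => sqmod (G z.1 z.2)) w Dw (fun z _ => sqmod_ge0 _)).
Qed.

Lemma cvgC x y : DX x -> DY y ->
  (fun M => sqmod (\sum_(w <- eW M) F x w * G w y)) @ \oo --> sqmod (Cm x y).
Proof.
move=> Dx Dy; have [h1 h2] := summ_prod (sliceF _ Dx) (sliceG _ Dy).
exact: (sqmod_cvg hW h1 h2).
Qed.

Lemma sum_le_fineF (xs : seq X) (ws : seq W) : uniq xs -> uniq ws ->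
  (forall x, x \in xs -> DX x) -> (forall w, w \in ws -> DW w) ->
  \sum_(x <- xs) \sum_(w <- ws) sqmod (F x w) <= fine EF.
Proof.
move=> ux uw sx sw; apply: le_fine hF.
rewrite -(big_allpairs (F := fun z => sqmod (F z.1 z.2))).
apply: esum_ge_seq.
  by apply: allpairs_uniq => // -[? ?] [? ?] _ _ [-> ->].
by move=> z /allpairsP [[x w] [/= xi wi ->]]; split; [apply: sx|apply: sw].
Qed.

Lemma sum_le_fineG (ws : seq W) (ys : seq Y) : uniq ws -> uniq ys ->
  (forall w, w \in ws -> DW w) -> (forall y, y \in ys -> DY y) ->
  \sum_(w <- ws) \sum_(y <- ys) sqmod (G w y) <= fine EG.
Proof.
move=> uw uy sw sy; apply: le_fine hG.
rewrite -(big_allpairs (F := fun z => sqmod (G z.1 z.2))).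
apply: esum_ge_seq.
  by apply: allpairs_uniq => // -[? ?] [? ?] _ _ [-> ->].
by move=> z /allpairsP [[w y] [/= wi yi ->]]; split; [apply: sw|apply: sy].
Qed.

Lemma P2abs :
  (\esum_(z in DX `*` DY) (sqmod (Cm z.1 z.2))%:E <= (fine EF * fine EG)%:E)%E.
Proof.
apply: (esum_le_exh (exhX hX hY)); first by move=> z _; exact: sqmod_ge0.
move=> N; rewrite big_allpairs /=.
apply: (@lim_le _ (fun M => \sum_(x <- eX N) \sum_(y <- eY N)
           sqmod (\sum_(w <- eW M) F x w * G w y)) (fun=> fine EF * fine EG) _ _ 0%N).
- apply: cvg_bigsum => x xi; apply: cvg_bigsum => y yi.
  by apply: cvgC; [exact: (exh_sub hX N) | exact: (exh_sub hY N)].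
- exact: cvg_cst.
move=> M _.
apply: le_trans (_ : \sum_(x <- eX N) \sum_(y <- eY N)
   ((\sum_(w <- eW M) sqmod (F x w)) * (\sum_(w <- eW M) sqmod (G w y))) <= _).
  by apply: ler_sum => x _; apply: ler_sum => y _; apply: CSc.
rewrite (_ : \sum_(x <- eX N) _ = (\sum_(x <- eX N) \sum_(w <- eW M) sqmod (F x w)) *
   (\sum_(w <- eW M) \sum_(y <- eY N) sqmod (G w y))); last first.
  rewrite mulr_suml; apply: eq_bigr => x _; rewrite [in RHS]exchange_big /= mulr_sumr.
  by apply: eq_bigr => y _.
apply: ler_pM.
- by apply: sumr_ge0 => x _; apply: sumr_ge0 => w _; exact: sqmod_ge0.
- by apply: sumr_ge0 => x _; apply: sumr_ge0 => w _; exact: sqmod_ge0.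
- apply: sum_le_fineF; [exact: (exh_uniq hX) | exact: (exh_uniq hW) | |].
  + exact: (exh_sub hX N).
  + exact: (exh_sub hW M).
- apply: sum_le_fineG; [exact: (exh_uniq hW) | exact: (exh_uniq hY) | |].
  + exact: (exh_sub hW M).
  + exact: (exh_sub hY N).
Qed.


Definition Am w w' := csum DX (fun x => F x w * cconj (F x w')).
Definition Bm w w' := csum DY (fun y => G w y * cconj (G w' y)).

Lemma cvgA w w' : DW w -> DW w' ->
  (fun K => sqmod (\sum_(x <- eX K) F x w * cconj (F x w'))) @ \oo --> sqmod (Am w w').
Proof.
move=> Dw Dw'.
have h2 : (\esum_(x in DX) (sqmod (cconj (F x w')))%:E < +oo)%E.
  by under eq_esum do rewrite sqmod_cconj; exact: sliceF1.
have [h3 h4] := summ_prod (sliceF1 _ Dw) h2.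
exact: (sqmod_cvg hX h3 h4).
Qed.

Lemma cvgBm w w' : DW w -> DW w' ->
  (fun K => sqmod (\sum_(y <- eY K) G w y * cconj (G w' y))) @ \oo --> sqmod (Bm w w').
Proof.
move=> Dw Dw'.
have h2 : (\esum_(y in DY) (sqmod (cconj (G w' y)))%:E < +oo)%E.
  by under eq_esum do rewrite sqmod_cconj; exact: sliceG1.
have [h3 h4] := summ_prod (sliceG1 _ Dw) h2.
exact: (sqmod_cvg hY h3 h4).
Qed.

Let EA := \esum_(z in DW `*` DW) (sqmod (Am z.1 z.2))%:E.
Let EB := \esum_(z in DW `*` DW) (sqmod (Bm z.1 z.2))%:E.

Lemma sum_le_fineWW (r : W * W -> R) (E : \bar R) (ws : seq W) :
  E = \esum_(z in DW `*` DW) (r z)%:E -> (E < +oo)%E -> uniq ws ->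
  (forall w, w \in ws -> DW w) ->
  \sum_(w <- ws) \sum_(w' <- ws) r (w, w') <= fine E.
Proof.
move=> -> hE uw sw; apply: le_fine hE.
rewrite -(big_allpairs (F := r)).
apply: esum_ge_seq.
  by apply: allpairs_uniq => // -[? ?] [? ?] _ _ [-> ->].
by move=> z /allpairsP [[w w'] [/= wi wi' ->]]; split; [apply: sw|apply: sw].
Qed.

Lemma P3abs : (EA < +oo)%E -> (EB < +oo)%E ->
  (\esum_(z in DX `*` DY) (sqmod (Cm z.1 z.2))%:E <=
     (2^-1 * fine EA + 2^-1 * fine EB)%:E)%E.
Proof.
move=> hA hB.
apply: (esum_le_exh (exhX hX hY)); first by move=> z _; exact: sqmod_ge0.
move=> N; rewrite big_allpairs /=.
apply: (@lim_le _ (fun M => \sum_(x <- eX N) \sum_(y <- eY N)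
           sqmod (\sum_(w <- eW M) F x w * G w y)) (fun=> 2^-1 * fine EA + 2^-1 * fine EB) _ _ 0%N).
- apply: cvg_bigsum => x xi; apply: cvg_bigsum => y yi.
  by apply: cvgC; [exact: (exh_sub hX N) | exact: (exh_sub hY N)].
- exact: cvg_cst.
move=> M _.
set S := \sum_(x <- eX N) _.
set bA := \sum_(w <- eW M) \sum_(w' <- eW M) sqmod (Am w w').
set bB := \sum_(w <- eW M) \sum_(w' <- eW M) sqmod (Bm w w').
have sW := exh_sub hW M.
apply: (@le_trans _ _ (2^-1 * bA + 2^-1 * bB)); last first.
  apply: lerD; rewrite ler_pM2l ?invr_gt0 ?ltr0n //.
    by apply: (@sum_le_fineWW (fun z => sqmod (Am z.1 z.2))) => //; exact: exh_uniq hW M.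
  by apply: (@sum_le_fineWW (fun z => sqmod (Bm z.1 z.2))) => //; exact: exh_uniq hW M.
apply: (@lim_le _ (fun=> S) (fun K => 2^-1 * \sum_(w <- eW M) \sum_(w' <- eW M)
      sqmod (\sum_(x <- eX K) F x w * cconj (F x w'))
   + 2^-1 * \sum_(w <- eW M) \sum_(w' <- eW M)
      sqmod (\sum_(y <- eY K) G w y * cconj (G w' y))) _ _ N).
- exact: cvg_cst.
- apply: cvgD; apply: cvgM; try exact: cvg_cst.
    apply: cvg_bigsum => w wi; apply: cvg_bigsum => w' wi'; apply: cvgA; exact: sW.
  apply: cvg_bigsum => w wi; apply: cvg_bigsum => w' wi'; apply: cvgBm; exact: sW.
move=> K NK.
apply: le_trans (fin3 _ _ _ (eX K) (eW M) (eY K) F G).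
have g0 : forall x y, 0 <= sqmod (\sum_(w <- eW M) F x w * G w y) by move=> *; exact: sqmod_ge0.
apply: (@le_trans _ _ (\sum_(x <- eX N) \sum_(y <- eY K) sqmod (\sum_(w <- eW M) F x w * G w y))).
  apply: ler_sum => x _; apply: sum_sub_le => //; try exact: (exh_uniq hY).
  exact: (exh_mono hY N K NK).
apply: (@sum_sub_le _ _ _ _ (fun x => \sum_(y <- eY K) sqmod (\sum_(w <- eW M) F x w * G w y))); try exact: (exh_uniq hX).
  exact: (exh_mono hX N K NK).
by move=> x _; apply: sumr_ge0 => y _.
Qed.

End Abstract.



Section Conc.
Context {I : countType}.
Local Notation T2 := (seq I * seq I)%type.

Lemma bij_inv {A B : Type} (P : set A) (Q : set B) (e : A -> B) (g : B -> A) :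
  (forall x, P x -> Q (e x)) -> (forall y, Q y -> P (g y)) ->
  (forall x, P x -> g (e x) = x) -> (forall y, Q y -> e (g y) = y) -> set_bij P Q e.
Proof.
move=> h1 h2 h3 h4; split.
- by move=> x Px; apply: h1.
- by move=> x y; rewrite !inE => Px Py exy; rewrite -(h3 x Px) -(h3 y Py) exy.
- by move=> y Qy; exists (g y); [apply: h2 | apply: h4].
Qed.

Lemma take_sz {t : seq I} {a c : nat} : size t = (a + c)%N -> size (take a t) = a.
Proof. by move=> h; rewrite size_takel // h leq_addr. Qed.
Lemma drop_sz {t : seq I} {a c : nat} : size t = (a + c)%N -> size (drop a t) = c.
Proof. by move=> h; rewrite size_drop h addKn. Qed.

Lemma bij_A (a b c d n m : nat) : n = (a + c)%N -> m = (b + d)%N ->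
  set_bij (@arity I a b `*` @arity I c d) (@arity I n m)
    (fun z => (z.1.1 ++ z.2.1, z.1.2 ++ z.2.2)).
Proof.
move=> -> ->.
apply: (@bij_inv _ _ _ _ _ (fun y => ((take a y.1, take b y.2), (drop a y.1, drop b y.2)))).
- by move=> [[t s] [t' s']] [[/= ht hs] [/= ht' hs']]; rewrite /arity /= !size_cat ht hs ht' hs'.
- move=> [t s] [/= ht hs]; split; split => /=;
    by [apply: (take_sz ht) | apply: (take_sz hs) | apply: (drop_sz ht) | apply: (drop_sz hs)].
- by move=> [[t s] [t' s']] [[/= ht hs] [/= ht' hs']]; rewrite -ht -hs !take_size_cat // !drop_size_cat.
- by move=> [t s] _ /=; rewrite !cat_take_drop.
Qed.

Lemma bij_B (a b c d n m : nat) : n = (c + b)%N -> m = (d + a)%N ->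
  set_bij (@arity I a b `*` @arity I c d) (@arity I n m)
    (fun z => (z.2.1 ++ z.1.2, z.2.2 ++ z.1.1)).
Proof.
move=> -> ->.
apply: (@bij_inv _ _ _ _ _ (fun y => ((drop d y.2, drop c y.1), (take c y.1, take d y.2)))).
- by move=> [[t s] [t' s']] [[/= ht hs] [/= ht' hs']]; rewrite /arity /= !size_cat ht hs ht' hs'.
- move=> [t s] [/= ht hs]; split; split => /=;
    by [apply: (take_sz ht) | apply: (take_sz hs) | apply: (drop_sz ht) | apply: (drop_sz hs)].
- by move=> [[t s] [t' s']] [[/= ht hs] [/= ht' hs']]; rewrite -ht' -hs' !take_size_cat // !drop_size_cat.
- by move=> [t s] _ /=; rewrite !cat_take_drop.
Qed.

Lemma bij_C (a b c d n m : nat) : n = (a + d)%N -> m = (b + c)%N ->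
  set_bij (@arity I a b `*` @arity I c d) (@arity I n m)
    (fun z => (z.1.1 ++ z.2.2, z.1.2 ++ z.2.1)).
Proof.
move=> -> ->.
apply: (@bij_inv _ _ _ _ _ (fun y => ((take a y.1, take b y.2), (drop b y.2, drop a y.1)))).
- by move=> [[t s] [t' s']] [[/= ht hs] [/= ht' hs']]; rewrite /arity /= !size_cat ht hs ht' hs'.
- move=> [t s] [/= ht hs]; split; split => /=;
    by [apply: (take_sz ht) | apply: (take_sz hs) | apply: (drop_sz ht) | apply: (drop_sz hs)].
- by move=> [[t s] [t' s']] [[/= ht hs] [/= ht' hs']]; rewrite -ht -hs !take_size_cat // !drop_size_cat.
- by move=> [t s] _ /=; rewrite !cat_take_drop.
Qed.

Lemma bij_D (a b c d n m : nat) : n = (b + c)%N -> m = (a + d)%N ->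
  set_bij (@arity I a b `*` @arity I c d) (@arity I n m)
    (fun z => (z.1.2 ++ z.2.1, z.1.1 ++ z.2.2)).
Proof.
move=> -> ->.
apply: (@bij_inv _ _ _ _ _ (fun y => ((take a y.2, take b y.1), (drop b y.1, drop a y.2)))).
- by move=> [[t s] [t' s']] [[/= ht hs] [/= ht' hs']]; rewrite /arity /= !size_cat ht hs ht' hs'.
- move=> [t s] [/= ht hs]; split; split => /=;
    by [apply: (take_sz ht) | apply: (take_sz hs) | apply: (drop_sz ht) | apply: (drop_sz hs)].
- by move=> [[t s] [t' s']] [[/= ht hs] [/= ht' hs']]; rewrite -ht -hs !take_size_cat // !drop_size_cat.
- by move=> [t s] _ /=; rewrite !cat_take_drop.
Qed.


Definition elems N : seq I := pmap (@pickle_inv I) (iota 0 N).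

Lemma mem_elems x N : (x \in elems N) = (pickle x < N)%N.
Proof.
rewrite mem_pmap; apply/mapP/idP => [[n nN Hn]|xN].
  have := @pickle_invK I n; rewrite -Hn /= => ->.
  by rewrite mem_iota add0n in nN.
by exists (pickle x); rewrite ?mem_iota ?add0n // pickleK_inv.
Qed.

Lemma uniq_elems N : uniq (elems N).
Proof. exact: (pmap_uniq (@pickle_invK I) (iota_uniq 0 N)). Qed.

Fixpoint lists N p : seq (seq I) :=
  if p is p'.+1 then [seq x :: t | x <- elems N, t <- lists N p'] else [:: [::]].

Lemma mem_lists N p t : (t \in lists N p) = (size t == p) && all (fun x => pickle x < N)%N t.
Proof.
elim: p t => [|p IH] [|x t].
- by rewrite inE.
- by rewrite inE.
- by apply/allpairsP => -[[y u] [_ _]].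
rewrite /=; apply/allpairsP/idP => [[[y u] [/= yi ui [-> ->]]]|/andP[/eqP [st] /andP[xN aN]]].
  by move: ui; rewrite IH => /andP[/eqP -> ->]; rewrite eqxx -mem_elems yi.
by exists (x, t); split => //=; rewrite ?mem_elems ?IH ?st ?eqxx.
Qed.

Lemma uniq_lists N p : uniq (lists N p).
Proof.
elim: p => [|p IH] //=; apply: allpairs_uniq => //; first exact: uniq_elems.
by move=> [? ?] [? ?] _ _ /= [-> ->].
Qed.

Lemma exh_lists p : exh [set t : seq I | size t = p] (fun N => lists N p).
Proof.
split.
- by move=> N; apply: uniq_lists.
- by move=> N t; rewrite mem_lists => /andP[/eqP].
- move=> N M NM t; rewrite !mem_lists => /andP[-> /allP aN] /=.
  by apply/allP => x /aN xN; apply: leq_trans NM.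
- move=> t /= st; exists (\max_(x <- t) pickle x).+1.
  rewrite mem_lists st eqxx /=; apply/allP => x xt.
  by rewrite ltnS; apply: (@leq_bigmax_seq _ t xpredT (fun x => pickle x) x xt).
Qed.

Definition cube p q N : seq T2 := [seq (t, s) | t <- lists N p, s <- lists N q].

Lemma exh_cube p q : exh (@arity I p q) (cube p q).
Proof. exact: (exhX (exh_lists p) (exh_lists q)). Qed.

End Conc.



Section Part2.
Context {R : realType} {I : countType}.
Local Notation T2 := (seq I * seq I)%type.

Lemma eC_eq (p1 q1 p2 q2 i j : nat) (f1 f2 : tensor R I) :
  (i <= p1)%N -> (i <= q2)%N -> (j <= q1)%N -> (j <= p2)%N ->
  hnorm2 (p1 + p2 - i - j) (q1 + q2 - i - j) (contr p1 q1 i j f1 f2) =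
  \esum_(z in @arity I (p1 - i) (q1 - j) `*` @arity I (p2 - j) (q2 - i))
     (sqmod (Cm T2 T2 T2 (@arity I i j) (fun x w => f1 (x.1 ++ w.1) (x.2 ++ w.2))
                (fun w y => f2 (y.1 ++ w.2) (y.2 ++ w.1)) z.1 z.2))%:E.
Proof.
move=> ip1 iq2 jq1 jp2.
rewrite /hnorm2 (reindex_esum (@arity I (p1 - i) (q1 - j) `*` @arity I (p2 - j) (q2 - i)) _ (fun z => (z.1.1 ++ z.2.1, z.1.2 ++ z.2.2))); last first.
  by apply: bij_A; lia.
apply: eq_esum => -[[t s] [t' s']] [[/= ht hs] [/= ht' hs']].
by rewrite /contr /Cm /= !take_size_cat // !drop_size_cat.
Qed.

Lemma eF_eq (p1 q1 i j : nat) (f1 : tensor R I) :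
  (i <= p1)%N -> (j <= q1)%N ->
  hnorm2 p1 q1 f1 =
  \esum_(z in @arity I (p1 - i) (q1 - j) `*` @arity I i j)
     (sqmod ((fun x w => f1 (x.1 ++ w.1) (x.2 ++ w.2)) z.1 z.2))%:E.
Proof.
move=> ip1 jq1.
rewrite /hnorm2 (reindex_esum (@arity I (p1 - i) (q1 - j) `*` @arity I i j) _ (fun z => (z.1.1 ++ z.2.1, z.1.2 ++ z.2.2))) //.
by apply: bij_A; lia.
Qed.

Lemma eG_eq (p2 q2 i j : nat) (f2 : tensor R I) :
  (i <= q2)%N -> (j <= p2)%N ->
  hnorm2 p2 q2 f2 =
  \esum_(z in @arity I i j `*` @arity I (p2 - j) (q2 - i))
     (sqmod ((fun w y => f2 (y.1 ++ w.2) (y.2 ++ w.1)) z.1 z.2))%:E.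
Proof.
move=> iq2 jp2.
rewrite /hnorm2 (reindex_esum (@arity I i j `*` @arity I (p2 - j) (q2 - i)) _ (fun z => (z.2.1 ++ z.1.2, z.2.2 ++ z.1.1))) //.
by apply: bij_B; lia.
Qed.

Lemma part2 {p1 q1 p2 q2 i j : nat} {f1 f2 : tensor R I} :
  (hnorm2 p1 q1 f1 < +oo)%E -> (hnorm2 p2 q2 f2 < +oo)%E ->
  (i <= p1)%N -> (i <= q2)%N -> (j <= q1)%N -> (j <= p2)%N ->
  (hnorm2 (p1 + p2 - i - j) (q1 + q2 - i - j) (contr p1 q1 i j f1 f2) <=
    (fine (hnorm2 p1 q1 f1) * fine (hnorm2 p2 q2 f2))%:E)%E.
Proof.
move=> h1 h2 ip1 iq2 jq1 jp2.
rewrite (eC_eq _ _ _ _ _ _ _ _ ip1 iq2 jq1 jp2) (eF_eq _ _ i j _ ip1 jq1) (eG_eq _ _ i j _ iq2 jp2).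
rewrite (eF_eq _ _ i j _ ip1 jq1) in h1; rewrite (eG_eq _ _ i j _ iq2 jp2) in h2.
exact: (@P2abs R T2 T2 T2 _ _ _ _ _ _ (exh_cube _ _) (exh_cube _ _) (exh_cube _ _) _ _ h1 h2).
Qed.

End Part2.



Section Part3.
Context {R : realType} {I : countType}.
Local Notation T2 := (seq I * seq I)%type.

Lemma csum_eq {T : choiceType} (D : set T) (h h' : T -> R[i]) :
  (forall x, D x -> h x = h' x) -> csum D h = csum D h'.
Proof.
move=> H; rewrite /csum /rsum.
by congr (_ +i* _)%C; congr (fine _ - fine _); apply: eq_esum => x Dx; rewrite H.
Qed.

Lemma eA_eq (p1 q1 i j : nat) (f1 : tensor R I) : in_sym_space p1 q1 f1 ->
  (i <= p1)%N -> (j <= q1)%N ->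
  hnorm2 (i + j) (i + j) (contr p1 q1 (p1 - i) (q1 - j) f1 (rconj f1)) =
  \esum_(z in @arity I i j `*` @arity I i j)
     (sqmod (Am T2 T2 (@arity I (p1 - i) (q1 - j))
               (fun x w => f1 (x.1 ++ w.1) (x.2 ++ w.2)) z.1 z.2))%:E.
Proof.
move=> [_ sym] ip1 jq1.
rewrite /hnorm2 (reindex_esum (@arity I i j `*` @arity I i j) _ (fun z => (z.1.1 ++ z.2.2, z.1.2 ++ z.2.1))); last first.
  by apply: bij_C; lia.
apply: eq_esum => -[[u b] [c a]] [[/= hu hb] [/= hc ha]].
rewrite /contr /Am !subKn // (take_size_cat _ hu) (take_size_cat _ hb) (drop_size_cat _ hu) (drop_size_cat _ hb).
congr (sqmod _)%:E; apply: csum_eq => -[x1 x2] [/= h1 h2].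
have s1 : size (u ++ x1) = p1 by rewrite size_cat hu h1 subnKC.
have s2 : size (b ++ x2) = q1 by rewrite size_cat hb h2 subnKC.
have s3 : size (c ++ x1) = p1 by rewrite size_cat hc h1 subnKC.
have s4 : size (a ++ x2) = q1 by rewrite size_cat ha h2 subnKC.
have pC : forall s t : seq I, perm_eq (s ++ t) (t ++ s) by move=> s t; rewrite perm_catC.
by rewrite /rconj (sym _ _ _ _ s1 s2 (pC u x1) (pC b x2)) (sym _ _ _ _ s3 s4 (pC c x1) (pC a x2)).
Qed.

Lemma eB_eq (p2 q2 i j : nat) (f2 : tensor R I) : in_sym_space p2 q2 f2 ->
  (i <= q2)%N -> (j <= p2)%N ->
  hnorm2 (i + j) (i + j) (contr p2 q2 (p2 - j) (q2 - i) f2 (rconj f2)) =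
  \esum_(z in @arity I i j `*` @arity I i j)
     (sqmod (Bm T2 T2 (@arity I (p2 - j) (q2 - i))
               (fun w y => f2 (y.1 ++ w.2) (y.2 ++ w.1)) z.1 z.2))%:E.
Proof.
move=> [_ sym] iq2 jp2.
rewrite /hnorm2 (reindex_esum (@arity I i j `*` @arity I i j) _ (fun z => (z.1.2 ++ z.2.1, z.1.1 ++ z.2.2))); last first.
  by apply: bij_D; lia.
apply: eq_esum => -[[u v] [a c]] [[/= hu hv] [/= ha hc]].
rewrite /contr /Bm !subKn // (take_size_cat _ hv) (take_size_cat _ hu) (drop_size_cat _ hv) (drop_size_cat _ hu).
congr (sqmod _)%:E; apply: csum_eq => -[y1 y2] [/= h1 h2].
have s1 : size (v ++ y1) = p2 by rewrite size_cat hv h1 subnKC.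
have s2 : size (u ++ y2) = q2 by rewrite size_cat hu h2 subnKC.
have s3 : size (c ++ y1) = p2 by rewrite size_cat hc h1 subnKC.
have s4 : size (a ++ y2) = q2 by rewrite size_cat ha h2 subnKC.
have pC : forall s t : seq I, perm_eq (s ++ t) (t ++ s) by move=> s t; rewrite perm_catC.
by rewrite /rconj (sym _ _ _ _ s1 s2 (pC v y1) (pC u y2)) (sym _ _ _ _ s3 s4 (pC c y1) (pC a y2)).
Qed.

End Part3.



Section Sym.
Context {R : realType} {I : countType}.
Local Notation T2 := (seq I * seq I)%type.

Lemma sqmod1 : sqmod (1 : R[i]) = 1.
Proof. by rewrite /sqmod /= expr1n expr0n /= addr0. Qed.

Lemma size_index_enum (T : finType) : size (index_enum T) = #|T|.
Proof.
rewrite cardE -deprecated_filter_index_enum; congr size.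
by rewrite -[LHS]filter_predT; apply: eq_filter => x.
Qed.

Lemma sum_constF (T : finType) (c : R) : \sum_(k : T) c = #|T|%:R * c.
Proof.
rewrite big_const_seq count_predT size_index_enum.
by elim: #|T| => [|k IH] /=; rewrite ?mul0r // IH -natr1 mulrDl mul1r addrC.
Qed.

Lemma jensenF (T : finType) (a : T -> R[i]) :
  sqmod (\sum_(k : T) a k) <= #|T|%:R * \sum_(k : T) sqmod (a k).
Proof.
have := CSc _ (index_enum T) (fun=> 1) a.
under eq_bigr do rewrite mul1r.
have -> : \sum_(k <- index_enum T) sqmod (1 : R[i]) = #|T|%:R.
  under eq_bigr do rewrite sqmod1.
  by rewrite (sum_constF T 1) mulr1.
done.
Qed.

Lemma sqmod_realM (x : R) (z : R[i]) : sqmod ((x%:C)%C * z) = x ^+ 2 * sqmod z.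
Proof. rewrite /sqmod cReM cImM; case: z => a b /=; ring. Qed.

Lemma symz_coef (n m : nat) :
  (((n`!)%:R * (m`!)%:R : R[i])^-1) = ((((n`! * m`!)%:R : R)^-1)%:C)%C.
Proof. by rewrite -natrM -(rmorph_nat (real_complex R)) fmorphV. Qed.

Lemma size_pseq {n} {s : 'S_n} {t : seq I} : size t = n -> size (pseq s t) = n.
Proof.
by case: t => [|x t'] ht //=; rewrite size_map size_enum_ord.
Qed.

Lemma pseq_inj {n} {s : 'S_n} {t1 t2 : seq I} :
  size t1 = n -> size t2 = n -> pseq s t1 = pseq s t2 -> t1 = t2.
Proof.
case: t1 => [|x1 r1] h1; case: t2 => [|x2 r2] h2 //=.
- by move=> _; move: h1; rewrite -h2.
- by move=> _; move: h2; rewrite -h1.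
move=> /eq_in_map H.
apply: (@eq_from_nth _ x1); first by rewrite h1 h2.
move=> k; rewrite h1 => kn.
have := H (s^-1 (Ordinal kn))%g; rewrite mem_enum => /(_ isT) /=; rewrite permKV /= => ->.
by apply: set_nth_default; rewrite h2.
Qed.

Lemma part1 n m (C : tensor R I) : (hnorm2 n m C < +oo)%E ->
  (hnorm2 n m (symz n m C) <= hnorm2 n m C)%E.
Proof.
move=> hC.
have finE : hnorm2 n m C \is a fin_num by apply: (esum_fin (fun _ _ => sqmod_ge0 _) hC).
rewrite -(fineK finE).
apply: (esum_le_exh (exh_cube n m)); first by move=> z _; exact: sqmod_ge0.
move=> N.
set k : R := (n`! * m`!)%:R.
have k0 : 0 < k by rewrite /k ltr0n muln_gt0 !fact_gt0.
have step : forall z : T2, sqmod (symz n m C z.1 z.2) <=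
   k^-1 * \sum_(s : 'S_n) \sum_(t : 'S_m) sqmod (C (pseq s z.1) (pseq t z.2)).
  move=> z; rewrite /symz symz_coef sqmod_realM -/k.
  apply: (@le_trans _ _ (k^-1 ^+ 2 * (#|{perm 'I_n}|%:R *
       \sum_(s : 'S_n) (#|{perm 'I_m}|%:R * \sum_(t : 'S_m) sqmod (C (pseq s z.1) (pseq t z.2)))))).
    rewrite ler_pM2l ?exprn_gt0 ?invr_gt0 //.
    apply: (le_trans (jensenF _ (fun s : 'S_n => \sum_(t : 'S_m) C (pseq s z.1) (pseq t z.2)))).
    rewrite ler_pM2l ?ltr0n ?card_Sn ?fact_gt0 //.
    apply: ler_sum => s _; rewrite -card_Sn; apply: (jensenF _ (fun t : 'S_m => C (pseq s z.1) (pseq t z.2))).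
  rewrite -mulr_sumr !card_Sn.
  set S := \sum_(s : 'S_n) _.
  rewrite le_eqVlt; apply/orP; left; apply/eqP.
  have n0 : (n`!)%:R != 0 :> R by rewrite pnatr_eq0 -lt0n fact_gt0.
  have m0 : (m`!)%:R != 0 :> R by rewrite pnatr_eq0 -lt0n fact_gt0.
  rewrite /k natrM; field.
  by rewrite n0 m0.
apply: le_trans (ler_sum _ (fun z _ => step z)) _.
rewrite -mulr_sumr.
have inner : forall (s : 'S_n) (t : 'S_m),
    \sum_(z <- cube n m N) sqmod (C (pseq s z.1) (pseq t z.2)) <= fine (hnorm2 n m C).
  move=> s t.
  rewrite -(big_map (fun z : T2 => (pseq s z.1, pseq t z.2)) xpredT (fun z => sqmod (C z.1 z.2))).
  apply: le_fine hC; apply: esum_ge_seq.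
    rewrite map_inj_in_uniq; first exact: (exh_uniq (exh_cube n m)).
    move=> [t1 s1] [t2 s2] /(exh_sub (exh_cube n m)) [/= ht1 hs1] /(exh_sub (exh_cube n m)) [/= ht2 hs2] [].
    by move=> /(pseq_inj ht1 ht2) -> /(pseq_inj hs1 hs2) ->.
  move=> z /mapP [[t1 s1] /(exh_sub (exh_cube n m)) [/= ht1 hs1] ->].
  by split; apply: size_pseq.
rewrite exchange_big /=.
apply: (@le_trans _ _ (k^-1 * \sum_(s : 'S_n) \sum_(t : 'S_m) fine (hnorm2 n m C))).
  rewrite ler_pM2l ?invr_gt0 //; apply: ler_sum => s _.
  rewrite exchange_big /=; apply: ler_sum => t _; exact: inner.
under eq_bigr do rewrite sum_constF.
rewrite -mulr_sumr sum_constF !card_Sn.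
rewrite le_eqVlt; apply/orP; left; apply/eqP.
have n0 : (n`!)%:R != 0 :> R by rewrite pnatr_eq0 -lt0n fact_gt0.
have m0 : (m`!)%:R != 0 :> R by rewrite pnatr_eq0 -lt0n fact_gt0.
rewrite /k natrM; field.
by rewrite n0 m0.
Qed.

End Sym.



Section Fin.
Context {R : realType} {I : countType}.
Local Notation T2 := (seq I * seq I)%type.

Lemma hnorm2_rconj p q (f : tensor R I) : hnorm2 q p (rconj f) = hnorm2 p q f.
Proof.
rewrite [RHS]/hnorm2 (reindex_esum (@arity I q p) _ (fun x => (x.2, x.1))); last first.
  apply: (@bij_inv _ _ _ _ _ (fun x => (x.2, x.1))).
  - by move=> [t s] [/= ? ?].
  - by move=> [t s] [/= ? ?].
  - by move=> [t s].
  - by move=> [t s].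
by apply: eq_esum => -[t s] _; rewrite /rconj /= sqmod_cconj.
Qed.

Lemma rconj_sym {p q} {f : tensor R I} : in_sym_space p q f -> in_sym_space q p (rconj f).
Proof.
move=> [hf sym]; split; first by rewrite hnorm2_rconj.
move=> t t' s s' ht hs pt ps; rewrite /rconj; congr cconj; exact: sym.
Qed.

Lemma part3 {p1 q1 p2 q2 i j : nat} {f1 f2 : tensor R I} :
  in_sym_space p1 q1 f1 -> in_sym_space p2 q2 f2 ->
  (i <= p1)%N -> (i <= q2)%N -> (j <= q1)%N -> (j <= p2)%N ->
  (hnorm2 (i + j) (i + j) (contr p1 q1 (p1 - i) (q1 - j) f1 (rconj f1)) < +oo)%E ->
  (hnorm2 (i + j) (i + j) (contr p2 q2 (p2 - j) (q2 - i) f2 (rconj f2)) < +oo)%E ->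
  (hnorm2 (p1 + p2 - i - j) (q1 + q2 - i - j) (contr p1 q1 i j f1 f2) <=
    (2^-1 * fine (hnorm2 (i + j) (i + j) (contr p1 q1 (p1 - i) (q1 - j) f1 (rconj f1)))
     + 2^-1 * fine (hnorm2 (i + j) (i + j) (contr p2 q2 (p2 - j) (q2 - i) f2 (rconj f2))))%:E)%E.
Proof.
move=> s1 s2 ip1 iq2 jq1 jp2 hA hB.
have h1 := s1.1; have h2 := s2.1.
rewrite (eF_eq _ _ i j _ ip1 jq1) in h1; rewrite (eG_eq _ _ i j _ iq2 jp2) in h2.
rewrite (eA_eq _ _ _ _ _ s1 ip1 jq1) in hA *; rewrite (eB_eq _ _ _ _ _ s2 iq2 jp2) in hB *.
rewrite (eC_eq _ _ _ _ _ _ _ _ ip1 iq2 jq1 jp2).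
exact: (@P3abs R T2 T2 T2 _ _ _ _ _ _ (exh_cube _ _) (exh_cube _ _) (exh_cube _ _) _ _ h1 h2 hA hB).
Qed.

End Fin.



Theorem lemma3p7 (R : realType) (I : countType) (p1 q1 p2 q2 i j : nat)
    (f1 f2 : tensor R I) :
  in_sym_space p1 q1 f1 -> in_sym_space p2 q2 f2 ->
  (i <= minn p1 q2)%N -> (j <= minn q1 p2)%N ->
  let n := (p1 + p2 - i - j)%N in
  let m := (q1 + q2 - i - j)%N in
  let C := contr p1 q1 i j f1 f2 in
  let h1 := rconj f1 in
  let h2 := rconj f2 in
  [/\ (hnorm2 n m (symz n m C) < +oo)%E,
      (hnorm2 n m C < +oo)%E,
      hnorm n m (symz n m C) <= hnorm n m C,
      hnorm n m C <= hnorm p1 q1 f1 * hnorm p2 q2 f2 &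
      hnorm n m C ^+ 2 <=
        2^-1 * hnorm (i + j) (i + j) (contr p1 q1 (p1 - i) (q1 - j) f1 h1) ^+ 2
      + 2^-1 * hnorm (i + j) (i + j) (contr p2 q2 (p2 - j) (q2 - i) f2 h2) ^+ 2].
Proof.
move=> H1 H2 hi hj n m C h1 h2.
have [ip1 iq2] : (i <= p1)%N /\ (i <= q2)%N by move: hi; rewrite leq_min => /andP[].
have [jq1 jp2] : (j <= q1)%N /\ (j <= p2)%N by move: hj; rewrite leq_min => /andP[].
have nn : forall p q (f : tensor R I), (0 <= hnorm2 p q f)%E.
  by move=> p q f; apply: esum_ge0 => x _; rewrite lee_fin sqmod_ge0.
have finE : forall p q (f : tensor R I), (hnorm2 p q f < +oo)%E -> hnorm2 p q f \is a fin_num.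
  by move=> p q f lt; rewrite ge0_fin_numE.
have hC2 : (hnorm2 n m C <= (fine (hnorm2 p1 q1 f1) * fine (hnorm2 p2 q2 f2))%:E)%E.
  exact: (part2 H1.1 H2.1 ip1 iq2 jq1 jp2).
have ltC : (hnorm2 n m C < +oo)%E by apply: le_lt_trans hC2 (ltry _).
have hS : (hnorm2 n m (symz n m C) <= hnorm2 n m C)%E by apply: part1.
have ltS : (hnorm2 n m (symz n m C) < +oo)%E by apply: le_lt_trans hS ltC.
have hA : (hnorm2 (i + j) (i + j) (contr p1 q1 (p1 - i) (q1 - j) f1 h1) < +oo)%E.
  have := part2 H1.1 (rconj_sym H1).1 (leq_subr i p1) (leq_subr i p1) (leq_subr j q1) (leq_subr j q1).
  have -> : (p1 + q1 - (p1 - i) - (q1 - j))%N = (i + j)%N by lia.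
  have -> : (q1 + p1 - (p1 - i) - (q1 - j))%N = (i + j)%N by lia.
  by move=> H; apply: le_lt_trans H (ltry _).
have hB : (hnorm2 (i + j) (i + j) (contr p2 q2 (p2 - j) (q2 - i) f2 h2) < +oo)%E.
  have := part2 H2.1 (rconj_sym H2).1 (leq_subr j p2) (leq_subr j p2) (leq_subr i q2) (leq_subr i q2).
  have -> : (p2 + q2 - (p2 - j) - (q2 - i))%N = (i + j)%N by lia.
  have -> : (q2 + p2 - (p2 - j) - (q2 - i))%N = (i + j)%N by lia.
  by move=> H; apply: le_lt_trans H (ltry _).
have h3 := part3 H1 H2 ip1 iq2 jq1 jp2 hA hB.
split => //.
- rewrite /hnorm ler_sqrt ?fine_ge0 //; exact: fine_le (finE _ _ _ ltS) (finE _ _ _ ltC) hS.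
- rewrite /hnorm -sqrtrM ?fine_ge0 // ler_sqrt ?mulr_ge0 ?fine_ge0 //.
  by rewrite -lee_fin fineK // finE.
- rewrite /hnorm !sqr_sqrtr ?fine_ge0 //.
  by rewrite -lee_fin fineK // finE.
Qed.
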